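(* For all integers $n\geq0$, \[ \sum_{j=0}^n\binom{2j}{j}4^{n-j}O_jH_{n-j}=2^{2n-1}(n+1)\Bigl((1-H_{n+1})^2+1-H_{n+1}^{(2)}\Bigr)-\sum_{j=1}^nC_{n-j}4^{j-1}j\Bigl((1-H_j)^2+1-H_j^{(2)}\Bigr). \]
   Context: $H_n=\sum_{k=1}^n\frac1k$ ($H_0=0$), $H_n^{(2)}=\sum_{k=1}^n\frac1{k^2}$ ($H_0^{(2)}=0$), $O_n=\sum_{k=1}^n\frac1{2k-1}$ ($O_0=0$), and $C_n=\frac1{n+1}\binom{2n}{n}$ is the $n$th Catalan number. An empty sum is $0$. *)

(* Defs.v *)
From mathcomp Require Import all_boot all_order all_algebra.
Set Implicit Arguments. Unset Strict Implicit. Unset Printing Implicit Defensive.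
Import Order.TTheory GRing.Theory Num.Theory.
Local Open Scope ring_scope.

Definition H (n : nat) : rat := \sum_(1 <= k < n.+1) (k%:R)^-1.
Definition H2 (n : nat) : rat := \sum_(1 <= k < n.+1) ((k%:R) ^+ 2)^-1.
Definition O (n : nat) : rat := \sum_(1 <= k < n.+1) ((2 * k - 1)%N%:R)^-1.
Definition catalan (n : nat) : rat := ('C(2 * n, n))%:R / (n.+1)%:R.

(* Main.v *)
Require Import Defs.
From mathcomp Require Import all_boot all_order all_algebra.
From mathcomp Require Import ring lra zify.
Import Order.TTheory GRing.Theory Num.Theory.
Local Open Scope ring_scope.

Definition conv (a b : nat -> rat) (n : nat) : rat :=
  \sum_(0 <= j < n.+1) a j * b (n - j)%N.
Definition E (a : nat -> rat) (n : nat) : rat :=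
  (n.+1)%:R * a n.+1 - 4 * n%:R * a n.

Lemma Econv a b n : E (conv a b) n = conv (E a) b n + conv a (E b) n.
Proof.
rewrite /E /conv.
have H1 : \sum_(0 <= j < n.+1) (j.+1%:R * a j.+1 - 4 * j%:R * a j) * b (n - j)%N
  + \sum_(0 <= j < n.+1) a j * ((n - j).+1%:R * b (n - j).+1 - 4 * (n - j)%N%:R * b (n - j)%N)
  = \sum_(0 <= j < n.+1) j.+1%:R * a j.+1 * b (n.+1 - j.+1)%N
   + \sum_(0 <= j < n.+1) (n.+1 - j)%N%:R * a j * b (n.+1 - j)%N
   - 4 * n%:R * \sum_(0 <= j < n.+1) a j * b (n - j)%N.
  rewrite big_distrr /= -!big_split /= -sumrB.
  apply: eq_big_nat => j /andP[_ hj].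
  have -> : (n.+1 - j.+1 = n - j)%N by [].
  have -> : (n.+1 - j = (n - j).+1)%N by lia.
  have -> : ((n - j)%N%:R = n%:R - j%:R :> rat) by rewrite natrB //; lia.
  ring.
rewrite H1; congr (_ - _); symmetry.
have -> : \sum_(0 <= j < n.+1) j.+1%:R * a j.+1 * b (n.+1 - j.+1)%N
   = \sum_(0 <= j < n.+2) j%:R * a j * b (n.+1 - j)%N.
  by rewrite [in RHS]big_nat_recl //= mul0r mul0r add0r.
have -> : \sum_(0 <= j < n.+1) (n.+1 - j)%N%:R * a j * b (n.+1 - j)%N
   = \sum_(0 <= j < n.+2) (n.+1 - j)%N%:R * a j * b (n.+1 - j)%N.
  by rewrite [in RHS]big_nat_recr //= subnn mul0r mul0r addr0.
rewrite -big_split big_distrr /=; apply: eq_big_nat => j /andP[_ hj].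
have -> : ((n.+1 - j)%N%:R = n.+1%:R - j%:R :> rat) by rewrite natrB //; lia.
ring.
Qed.

Lemma conv_eqL a x y z al be n : (forall j, a j = al * x j + be * y j) ->
  conv a z n = al * conv x z n + be * conv y z n.
Proof.
move=> h; rewrite /conv !big_distrr -big_split /=; apply: eq_bigr => j _.
rewrite h; ring.
Qed.

Lemma conv_eqR a x y z al be n : (forall j, a j = al * x j + be * y j) ->
  conv z a n = al * conv z x n + be * conv z y n.
Proof.
move=> h; rewrite /conv !big_distrr -big_split /=; apply: eq_bigr => j _.
rewrite h; ring.
Qed.

Lemma uniqE (x y : nat -> rat) c : (forall n, E x n - c * x n = E y n - c * y n) ->
  x 0%N = y 0%N -> forall n, x n = y n.
Proof.
move=> h h0; elim=> [|n IH] //.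
have := h n; rewrite /E IH => e.
have hn : (n.+1)%:R != 0 :> rat by rewrite pnatr_eq0.
apply: (mulfI hn).
have : n.+1%:R * x n.+1 = (n.+1%:R * y n.+1 - 4 * n%:R * y n - c * y n) + 4 * n%:R * y n + c * y n
  by rewrite -e; ring.
move=> ->; ring.
Qed.

Lemma central k : (k.+1 * 'C(2 * k.+1, k.+1) = 2 * (2 * k).+1 * 'C(2 * k, k))%N.
Proof.
have e1 := mul_bin_diag (2 * k.+1) k.
have e2 := mul_bin_diag (2 * k).+1 k.
have hk : (k <= (2*k).+1)%N by lia.
have e3 := bin_sub hk.
have t1 : ((2 * k).+1 - k = k.+1)%N by lia.
rewrite t1 in e3.
have t2 : ((2 * k.+1).-1 = (2*k).+1)%N by lia.
rewrite t2 in e1.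
rewrite /= in e2.
rewrite -e1 -e3; nia.
Qed.

Ltac nz := repeat (apply/andP; split); apply: lt0r_neq0; match goal with n : nat |- _ => have := ler0n rat n end; lra.

Definition b n : rat := ('C(2 * n, n))%:R.
Definition p n : rat := 4 ^+ n.
Definition hh n : rat := 4 ^+ n * H n.
Definition a n : rat := b n * O n.
Definition f j : rat := (1 - H j) ^+ 2 + 1 - H2 j.
Definition g n : rat := 4 ^+ n * n.+1%:R * f n.+1.
Definition k n : rat := 4 ^+ n * (2 * n.+1%:R) * (H n.+1 - 1).
Definition m n : rat := 4 ^+ n * (2 * n.+1%:R).
Definition s n : rat := if n is j.+1 then -2 * catalan j else 1.

Lemma Hs n : H n.+1 = H n + (n.+1%:R)^-1.
Proof. by rewrite /H big_nat_recr. Qed.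
Lemma H2s n : H2 n.+1 = H2 n + (n.+1%:R ^+ 2)^-1.
Proof. by rewrite /H2 big_nat_recr. Qed.
Lemma Os n : O n.+1 = O n + ((2 * n).+1%:R)^-1.
Proof. rewrite /O big_nat_recr //=. by have -> : (2 * n.+1 - 1 = (2 * n).+1)%N by lia. Qed.
Lemma H0 : H 0 = 0. Proof. by rewrite /H big_geq. Qed.
Lemma O0 : O 0 = 0. Proof. by rewrite /O big_geq. Qed.
Lemma H1 : H 1 = 1. Proof. by rewrite Hs H0 add0r invr1. Qed.
Lemma H21 : H2 1 = 1. Proof. by rewrite H2s /H2 big_geq // add0r expr1n invr1. Qed.

Lemma bS n : n.+1%:R * b n.+1 = 2 * (2 * n.+1%:R - 1) * b n.
Proof.
rewrite /b -natrM central natrM natrM. ring.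
Qed.

Lemma Eb n : E b n = 2 * b n.
Proof. rewrite /E bS. ring. Qed.
Lemma Ep n : E p n = 4 * p n.
Proof. rewrite /E /p exprS. ring. Qed.
Lemma Ehh n : E hh n = 4 * hh n + 4 * p n.
Proof.
rewrite /E /hh /p Hs exprS.
have hn : (n.+1)%:R != 0 :> rat by rewrite pnatr_eq0.
field; nz.
Qed.
Lemma Ea n : E a n = 2 * a n + 2 * b n.
Proof.
rewrite /E /a Os.
have hn : ((2*n).+1)%:R != 0 :> rat by rewrite pnatr_eq0.
have -> : n.+1%:R * (b n.+1 * (O n + ((2 * n).+1%:R)^-1))
   = (n.+1%:R * b n.+1) * (O n + ((2 * n).+1%:R)^-1) by ring.
rewrite bS.
have e : ((2 * n).+1%:R = 1 + 2 * n%:R :> rat) by rewrite -nat1r natrM.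
rewrite e; rewrite e in hn.
field; nz.
Qed.
Lemma Em n : E m n = 8 * m n.
Proof. rewrite /E /m exprS. ring. Qed.
Lemma Ek n : E k n = 8 * k n + 4 * m n.
Proof.
rewrite /E /k /m (Hs n.+1) exprS.
have hn : (n.+2)%:R != 0 :> rat by rewrite pnatr_eq0.
field; nz.
Qed.
Lemma Eg n : E g n = 8 * g n + 4 * k n.
Proof.
rewrite /E /g /k /f (Hs n.+1) (H2s n.+1) exprS.
have hn : (n.+2)%:R != 0 :> rat by rewrite pnatr_eq0.
field; nz.
Qed.
Lemma Es n : E s n = -2 * s n + 0 * s n.
Proof.
rewrite /E /s; case: n => [|j] /=.
  rewrite /catalan /= bin0 invr1; ring.
rewrite /catalan.
have h1 : (j.+1)%:R != 0 :> rat by rewrite pnatr_eq0.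
have h2 : (j.+2)%:R != 0 :> rat by rewrite pnatr_eq0.
have := central j => /(congr1 (fun x => x%:R : rat)); rewrite !natrM => e.
have e2 : ((2 * j).+1%:R = 1 + 2 * j%:R :> rat) by rewrite -nat1r natrM.
rewrite e2 in e.
have eX : ('C(2 * j.+1, j.+1))%:R = 2%:R * (1 + 2 * j%:R) * ('C(2 * j, j))%:R / j.+1%:R :> rat.
  rewrite -e; field; nz.
rewrite eX; field; nz.
Qed.

Lemma E_lin (x y : nat -> rat) c d n : E (fun n => c * x n + d * y n) n = c * E x n + d * E y n.
Proof. rewrite /E; ring. Qed.

Definition P := conv a hh.
Definition Q := conv b hh.
Definition A1 := conv a p.
Definition B1 := conv b p.
Definition X := conv g s.
Definition Y := conv k s.
Definition M := conv m s.

Lemma EP n : E P n = 6 * P n + 2 * Q n + 4 * A1 n.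
Proof. rewrite /P Econv (conv_eqL _ _ _ _ _ _ _ Ea) (conv_eqR _ _ _ _ _ _ _ Ehh); rewrite /Q /A1 /P; ring. Qed.
Lemma Eb2 n : E b n = 2 * b n + 0 * b n. Proof. by rewrite Eb mul0r addr0. Qed.
Lemma Ep2 n : E p n = 4 * p n + 0 * p n. Proof. by rewrite Ep mul0r addr0. Qed.
Lemma Em2 n : E m n = 8 * m n + 0 * m n. Proof. by rewrite Em mul0r addr0. Qed.

Lemma EQ n : E Q n = 6 * Q n + 4 * B1 n.
Proof. rewrite /Q Econv (conv_eqL _ _ _ _ _ _ _ Eb2) (conv_eqR _ _ _ _ _ _ _ Ehh); rewrite /Q /B1; ring. Qed.
Lemma EA1 n : E A1 n = 6 * A1 n + 2 * B1 n.
Proof. rewrite /A1 Econv (conv_eqL _ _ _ _ _ _ _ Ea) (conv_eqR _ _ _ _ _ _ _ Ep2); rewrite /A1 /B1; ring. Qed.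
Lemma EB1 n : E B1 n = 6 * B1 n.
Proof. rewrite /B1 Econv (conv_eqL _ _ _ _ _ _ _ Eb2) (conv_eqR _ _ _ _ _ _ _ Ep2); ring. Qed.
Lemma EX n : E X n = 6 * X n + 4 * Y n.
Proof. rewrite /X Econv (conv_eqL _ _ _ _ _ _ _ Eg) (conv_eqR _ _ _ _ _ _ _ Es); rewrite /X /Y; ring. Qed.
Lemma EY n : E Y n = 6 * Y n + 4 * M n.
Proof. rewrite /Y Econv (conv_eqL _ _ _ _ _ _ _ Ek) (conv_eqR _ _ _ _ _ _ _ Es); rewrite /Y /M; ring. Qed.
Lemma EM n : E M n = 6 * M n.
Proof. rewrite /M Econv (conv_eqL _ _ _ _ _ _ _ Em2) (conv_eqR _ _ _ _ _ _ _ Es); ring. Qed.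

Lemma conv0 x y : conv x y 0 = x 0%N * y 0%N.
Proof. by rewrite /conv big_nat1. Qed.

Lemma MB n : M n = 2 * B1 n + 0 * B1 n.
Proof.
apply: (uniqE M (fun n => 2 * B1 n + 0 * B1 n) 6 _ _ n) => [j|].
  by rewrite E_lin EM EB1; ring.
rewrite /M /B1 !conv0 /m /s /b /p /= ?muln0 ?bin0 ?expr0; ring.
Qed.

Lemma YR n : Y n = 1 * Q n + 2 * A1 n.
Proof.
apply: (uniqE Y (fun n => 1 * Q n + 2 * A1 n) 6 _ _ n) => [j|].
  rewrite E_lin EY EQ EA1 MB; ring.
rewrite /Y /Q /A1 !conv0 /k /s /b /p /hh /a H1 H0 O0 /= ?muln0 ?bin0 ?expr0; ring.
Qed.

Lemma PX n : P n = (1/2) * X n + 0 * X n.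
Proof.
apply: (uniqE P (fun n => (1/2) * X n + 0 * X n) 6 _ _ n) => [j|].
  rewrite E_lin EP EX YR; field; by [].
rewrite /P /X !conv0 /g /s /f /hh /a H1 H21 H0 O0 /= ?muln0 ?bin0 ?expr0; field; by [].
Qed.

Theorem corollary10 (n : nat) :
  \sum_(0 <= j < n.+1) ('C(2 * j, j))%:R * 4 ^+ (n - j) * O j * H (n - j)
  = (2 ^+ (2 * n) / 2) * (n.+1)%:R
      * ((1 - H n.+1) ^+ 2 + 1 - H2 n.+1)
    - \sum_(1 <= j < n.+1) catalan (n - j) * 4 ^+ (j - 1) * j%:R
        * ((1 - H j) ^+ 2 + 1 - H2 j) :> rat.
Proof.
have -> : \sum_(0 <= j < n.+1) ('C(2 * j, j))%:R * 4 ^+ (n - j) * O j * H (n - j) = P n.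
  rewrite /P /conv; apply: eq_bigr => j _; rewrite /a /b /hh; ring.
rewrite PX /X /conv big_nat_recr //= subnn big_add1 /=.
have -> : (2 ^+ (2 * n) : rat) = 4 ^+ n by rewrite exprM; congr (_ ^+ _); ring.
have -> : \sum_(0 <= i < n) g i * s (n - i)%N
   = -2 * \sum_(0 <= i < n) catalan (n - i.+1) * 4 ^+ (i.+1 - 1) * i.+1%:R
        * ((1 - H i.+1) ^+ 2 + 1 - H2 i.+1).
  rewrite big_distrr /=; apply: eq_big_nat => i /andP[_ hi].
  have -> : (n - i = (n - i.+1).+1)%N by lia.
  rewrite /g /s /f subn1 /=; ring.
rewrite /g /s /f; field; by [].
Qed.
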